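(* Let $A=I_0+\dots+I_n$ be a sum of C$^*$-ideals, $J\subseteq\{0,\dots,n\}$ and $p\in\mathbb N$. Let $f\in B_J$ satisfy $f|_{\Delta^n_L}=0$ for every $L\subseteq\{0,\dots,n\}$ with $|L|=p+1$. Then $f$ is a finite sum $f=\sum_L f_L$ with $f_L\in B_L$, where each occurring $L$ satisfies $L\subseteq J$ and $|L|\le p$.
   Context: $\Delta^n=\{x\in[0,1]^{n+1}:\sum_ix_i=1\}$, $\partial\Delta^n$ = points with a zero coordinate, $\Delta^n_j=\{x\in\Delta^n:x_j\le x_i\ \forall i\}$, $\Delta^n_L=\bigcap_{j\in L}\Delta^n_j$ for nonempty $L$. $B=\{f:\Delta^n\to A\text{ continuous}: f|_{\partial\Delta^n}=0,\ f(\Delta^n_j)\subseteq I_j\ \forall j\}$ and $B_L=\{f\in B:f(\Delta^n_{j'})=0\ \forall j'\notin L\}$ (so $B_\emptyset=0$). *)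

(* Defs.v *)
From Stdlib Require Import Reals List.
Import ListNotations.
Open Scope R_scope.

Record Cplx : Type := mkC { Cre : R ; Cim : R }.
Definition Cadd (a b : Cplx) : Cplx := mkC (Cre a + Cre b) (Cim a + Cim b).
Definition Cmul (a b : Cplx) : Cplx :=
  mkC (Cre a * Cre b - Cim a * Cim b) (Cre a * Cim b + Cim a * Cre b).
Definition Cconj (a : Cplx) : Cplx := mkC (Cre a) (- Cim a).
Definition Cabs (a : Cplx) : R := sqrt (Cre a * Cre a + Cim a * Cim a).
Definition C1 : Cplx := mkC 1 0.

Record CStarAlgebra : Type := {
  car :> Type;
  zero : car;
  add : car -> car -> car;
  opp : car -> car;
  mul : car -> car -> car;
  scal : Cplx -> car -> car;
  star : car -> car;
  norm : car -> R;
  add_assoc : forall x y z, add x (add y z) = add (add x y) z;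
  add_comm : forall x y, add x y = add y x;
  add_zero : forall x, add x zero = x;
  add_opp : forall x, add x (opp x) = zero;
  scal_assoc : forall a b x, scal a (scal b x) = scal (Cmul a b) x;
  scal_one : forall x, scal C1 x = x;
  scal_distr_l : forall a x y, scal a (add x y) = add (scal a x) (scal a y);
  scal_distr_r : forall a b x, scal (Cadd a b) x = add (scal a x) (scal b x);
  mul_assoc : forall x y z, mul x (mul y z) = mul (mul x y) z;
  mul_add_l : forall x y z, mul (add x y) z = add (mul x z) (mul y z);
  mul_add_r : forall x y z, mul x (add y z) = add (mul x y) (mul x z);
  mul_scal_l : forall a x y, mul (scal a x) y = scal a (mul x y);
  mul_scal_r : forall a x y, mul x (scal a y) = scal a (mul x y);
  norm_nonneg : forall x, 0 <= norm x;
  norm_eq0 : forall x, norm x = 0 -> x = zero;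
  norm_triangle : forall x y, norm (add x y) <= norm x + norm y;
  norm_scal : forall a x, norm (scal a x) = Cabs a * norm x;
  norm_submult : forall x y, norm (mul x y) <= norm x * norm y;
  complete : forall u : nat -> car,
    (forall eps, eps > 0 -> exists N, forall m k, (m >= N)%nat -> (k >= N)%nat ->
        norm (add (u m) (opp (u k))) < eps) ->
    exists l, forall eps, eps > 0 -> exists N, forall m, (m >= N)%nat ->
        norm (add (u m) (opp l)) < eps;
  star_add : forall x y, star (add x y) = add (star x) (star y);
  star_scal : forall a x, star (scal a x) = scal (Cconj a) (star x);
  star_mul : forall x y, star (mul x y) = mul (star y) (star x);
  star_star : forall x, star (star x) = x;
  cstar_id : forall x, norm (mul (star x) x) = norm x * norm x
}.

Arguments zero {_}.
Arguments add {_}.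
Arguments opp {_}.
Arguments mul {_}.
Arguments scal {_}.
Arguments norm {_}.

Definition is_cstar_ideal (A : CStarAlgebra) (I : A -> Prop) : Prop :=
  I zero /\
  (forall x y, I x -> I y -> I (add x y)) /\
  (forall a x, I x -> I (scal a x)) /\
  (forall a x, I x -> I (mul a x) /\ I (mul x a)) /\
  (forall (u : nat -> A) (l : A), (forall m, I (u m)) ->
     (forall eps, eps > 0 -> exists N, forall m, (m >= N)%nat ->
        norm (add (u m) (opp l)) < eps) -> I l).

Fixpoint asum (A : CStarAlgebra) (g : nat -> A) (n : nat) : A :=
  match n with
  | O => g O
  | S k => add (asum A g k) (g (S k))
  end.

Definition is_sum_of_ideals (A : CStarAlgebra) (I : nat -> A -> Prop) (n : nat) : Prop :=
  (forall j, (j <= n)%nat -> is_cstar_ideal A (I j)) /\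
  (forall a : A, exists g : nat -> A,
      (forall j, (j <= n)%nat -> I j (g j)) /\ a = asum A g n).

(** Points of R^{n+1} are functions nat -> R; only coordinates 0..n matter. *)
Definition simplex (n : nat) (x : nat -> R) : Prop :=
  (forall i, (i <= n)%nat -> 0 <= x i <= 1) /\ sum_f_R0 x n = 1.

Definition simplex_boundary (n : nat) (x : nat -> R) : Prop :=
  simplex n x /\ exists i, (i <= n)%nat /\ x i = 0.

Definition simplex_j (n j : nat) (x : nat -> R) : Prop :=
  simplex n x /\ forall i, (i <= n)%nat -> x j <= x i.

Definition simplex_L (n : nat) (L : list nat) (x : nat -> R) : Prop :=
  simplex n x /\ forall j, In j L -> simplex_j n j x.

(** L is a subset of {0,...,n} (given as a duplicate-free list, |L| = length L) *)
Definition index_set (n : nat) (L : list nat) : Prop :=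
  NoDup L /\ forall j, In j L -> (j <= n)%nat.

Definition cont_on_simplex (A : CStarAlgebra) (n : nat) (f : (nat -> R) -> A) : Prop :=
  forall x, simplex n x -> forall eps, eps > 0 -> exists delta, delta > 0 /\
    forall y, simplex n y -> (forall i, (i <= n)%nat -> Rabs (y i - x i) < delta) ->
      norm (add (f y) (opp (f x))) < eps.

Definition in_B (A : CStarAlgebra) (I : nat -> A -> Prop) (n : nat)
    (f : (nat -> R) -> A) : Prop :=
  cont_on_simplex A n f /\
  (forall x, simplex_boundary n x -> f x = zero) /\
  (forall j x, (j <= n)%nat -> simplex_j n j x -> I j (f x)).

Definition in_B_L (A : CStarAlgebra) (I : nat -> A -> Prop) (n : nat)
    (L : list nat) (f : (nat -> R) -> A) : Prop :=
  in_B A I n f /\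
  (forall j' x, (j' <= n)%nat -> ~ In j' L -> simplex_j n j' x -> f x = zero).

Definition fam_sum (A : CStarAlgebra) (F : list (list nat * ((nat -> R) -> A)))
    (x : nat -> R) : A :=
  fold_right (fun p acc => add (snd p x) acc) zero F.

(* Main.v *)
Require Import Defs.
From Stdlib Require Import Reals List Lra Classical Arith Lia.
Import ListNotations.
Open Scope R_scope.

Definition rC (r : R) : Cplx := mkC r 0.

Lemma opp_unique (A : CStarAlgebra) (x y : A) : add x y = zero -> y = opp x.
Proof.
  intro H. rewrite <- (add_zero A y). rewrite <- (add_opp A x).
  rewrite (add_assoc A), (add_comm A y x), H, (add_comm A), add_zero. reflexivity.
Qed.

Lemma self_add_zero (A : CStarAlgebra) (s : A) : add s s = s -> s = zero.
Proof.
  intro H. transitivity (add (add s s) (opp s)).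
  - now rewrite <- (add_assoc A), (add_opp A), add_zero.
  - now rewrite H, add_opp.
Qed.

Lemma scal0 (A : CStarAlgebra) (v : A) : scal (rC 0) v = zero.
Proof.
  apply self_add_zero. rewrite <- scal_distr_r. unfold Cadd, rC; simpl.
  now rewrite Rplus_0_l.
Qed.

Lemma scal_zero (A : CStarAlgebra) (c : Cplx) : scal c (@zero A) = zero.
Proof.
  apply self_add_zero. rewrite <- scal_distr_l. now rewrite add_zero.
Qed.

Lemma opp_zero (A : CStarAlgebra) : opp (@zero A) = zero.
Proof. symmetry. apply opp_unique. apply add_zero. Qed.

Lemma scal_opp (A : CStarAlgebra) (r : R) (v : A) :
  opp (scal (rC r) v) = scal (rC (- r)) v.
Proof.
  symmetry. apply opp_unique. rewrite <- scal_distr_r.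
  unfold Cadd, rC; simpl. rewrite Rplus_opp_r, Rplus_0_l. apply (scal0 A).
Qed.

Lemma scal_add_r (A : CStarAlgebra) (a b : R) (v : A) :
  add (scal (rC a) v) (scal (rC b) v) = scal (rC (a + b)) v.
Proof. rewrite <- scal_distr_r. unfold Cadd, rC; simpl. now rewrite Rplus_0_l. Qed.

Lemma scal_opp_v (A : CStarAlgebra) (r : R) (v : A) :
  scal (rC r) (opp v) = opp (scal (rC r) v).
Proof.
  apply opp_unique. rewrite <- scal_distr_l, add_opp. apply scal_zero.
Qed.

Lemma key_id (A : CStarAlgebra) (a b : R) (u v : A) :
  add (scal (rC a) u) (opp (scal (rC b) v)) =
  add (scal (rC a) (add u (opp v))) (scal (rC (a - b)) v).
Proof.
  rewrite scal_distr_l, scal_opp_v, !scal_opp, <- add_assoc, scal_add_r.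
  f_equal. f_equal. f_equal. ring.
Qed.

Lemma scal_one_r (A : CStarAlgebra) (v : A) : scal (rC 1) v = v.
Proof. apply scal_one. Qed.

Lemma norm_scalR (A : CStarAlgebra) (r : R) (v : A) :
  norm (scal (rC r) v) = Rabs r * norm v.
Proof.
  rewrite norm_scal. unfold Cabs, rC; simpl. rewrite Rmult_0_l, Rplus_0_r.
  now rewrite <- sqrt_Rsqr_abs.
Qed.

Definition rc (n : nat) (h : (nat -> R) -> R) (x : nat -> R) : Prop :=
  forall eps, eps > 0 -> exists d, d > 0 /\ forall y, simplex n y ->
    (forall i, (i <= n)%nat -> Rabs (y i - x i) < d) -> Rabs (h y - h x) < eps.

Lemma rc_ext n h1 h2 x : (forall y, h1 y = h2 y) -> rc n h1 x -> rc n h2 x.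
Proof.
  intros E H eps He. destruct (H eps He) as [d [Hd Hy]]. exists d; split; auto.
  intros y Sy Cy. rewrite <- !E. auto.
Qed.

Lemma rc_const n c x : rc n (fun _ => c) x.
Proof. intros eps He. exists 1; split; [lra|]. intros. rewrite Rminus_diag, Rabs_R0. lra. Qed.

Lemma rc_coord n i x : (i <= n)%nat -> rc n (fun y => y i) x.
Proof. intros Hi eps He. exists eps; split; auto. Qed.

Lemma rc_comp n h g x : rc n h x -> continuity_pt g (h x) -> rc n (fun y => g (h y)) x.
Proof.
  intros H G eps He. destruct (G eps He) as [a [Ha Hg]].
  destruct (H a Ha) as [d [Hd Hy]]. exists d; split; auto.
  intros y Sy Cy. destruct (Req_dec_T (h y) (h x)) as [E|E].
  - rewrite E, Rminus_diag, Rabs_R0. lra.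
  - apply (Hg (h y)). split.
    + split; [exact I| auto].
    + simpl. unfold R_dist. auto.
Qed.

Lemma rc_plus n h1 h2 x : rc n h1 x -> rc n h2 x -> rc n (fun y => h1 y + h2 y) x.
Proof.
  intros H1 H2 eps He.
  destruct (H1 (eps/2)) as [d1 [Hd1 Y1]]; [lra|].
  destruct (H2 (eps/2)) as [d2 [Hd2 Y2]]; [lra|].
  exists (Rmin d1 d2); split; [apply Rmin_pos; auto|].
  intros y Sy Cy.
  assert (A1 := Y1 y Sy (fun i hi => Rlt_le_trans _ _ _ (Cy i hi) (Rmin_l _ _))).
  assert (A2 := Y2 y Sy (fun i hi => Rlt_le_trans _ _ _ (Cy i hi) (Rmin_r _ _))).
  replace (h1 y + h2 y - (h1 x + h2 x)) with ((h1 y - h1 x) + (h2 y - h2 x)) by ring.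
  eapply Rle_lt_trans; [apply Rabs_triang|]. lra.
Qed.

Lemma rc_opp n h x : rc n h x -> rc n (fun y => - h y) x.
Proof.
  intros H eps He. destruct (H eps He) as [d [Hd Y]]. exists d; split; auto.
  intros y Sy Cy. replace (- h y - - h x) with (- (h y - h x)) by ring.
  rewrite Rabs_Ropp. auto.
Qed.

Lemma rc_mult n h1 h2 x : rc n h1 x -> rc n h2 x -> rc n (fun y => h1 y * h2 y) x.
Proof.
  intros H1 H2 eps He.
  set (a := Rabs (h1 x)). set (b := Rabs (h2 x)).
  assert (Ha : 0 <= a) by apply Rabs_pos. assert (Hb : 0 <= b) by apply Rabs_pos.
  destruct (H1 (Rmin 1 (eps / (2 * (b + 1))))) as [d1 [Hd1 Y1]].
  { apply Rmin_pos; [lra|]. apply Rdiv_lt_0_compat; lra. }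
  destruct (H2 (eps / (2 * (a + 2)))) as [d2 [Hd2 Y2]].
  { apply Rdiv_lt_0_compat; lra. }
  exists (Rmin d1 d2); split; [apply Rmin_pos; auto|].
  intros y Sy Cy.
  assert (A1 := Y1 y Sy (fun i hi => Rlt_le_trans _ _ _ (Cy i hi) (Rmin_l _ _))).
  assert (A2 := Y2 y Sy (fun i hi => Rlt_le_trans _ _ _ (Cy i hi) (Rmin_r _ _))).
  assert (A1a : Rabs (h1 y - h1 x) < 1) by (eapply Rlt_le_trans; [apply A1| apply Rmin_l]).
  assert (A1b : Rabs (h1 y - h1 x) <= eps / (2 * (b + 1))) by (left; eapply Rlt_le_trans; [apply A1| apply Rmin_r]).
  replace (h1 y * h2 y - h1 x * h2 x) with (h1 y * (h2 y - h2 x) + h2 x * (h1 y - h1 x)) by ring.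
  eapply Rle_lt_trans; [apply Rabs_triang|]. rewrite !Rabs_mult.
  assert (Hy1 : Rabs (h1 y) <= a + 1).
  { replace (h1 y) with (h1 x + (h1 y - h1 x)) by ring.
    eapply Rle_trans; [apply Rabs_triang|]. unfold a. lra. }
  assert (E1 : Rabs (h1 y) * Rabs (h2 y - h2 x) < eps / 2).
  { apply Rle_lt_trans with ((a + 1) * Rabs (h2 y - h2 x)).
    - apply Rmult_le_compat_r; [apply Rabs_pos|auto].
    - apply Rle_lt_trans with ((a + 2) * Rabs (h2 y - h2 x)).
      + apply Rmult_le_compat_r; [apply Rabs_pos|lra].
      + apply Rlt_le_trans with ((a + 2) * (eps / (2 * (a + 2)))).
        * apply Rmult_lt_compat_l; [lra|auto].
        * right. field. lra. }
  assert (E2 : b * Rabs (h1 y - h1 x) <= eps / 2 * (b / (b + 1))).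
  { apply Rle_trans with (b * (eps / (2 * (b + 1)))).
    - apply Rmult_le_compat_l; auto.
    - right. field. lra. }
  assert (b / (b + 1) < 1).
  { apply (Rmult_lt_reg_r (b + 1)); [lra|]. unfold Rdiv. rewrite Rmult_assoc, Rinv_l; lra. }
  fold b. nra.
Qed.

Lemma rc_inv n h x : rc n h x -> h x <> 0 -> rc n (fun y => / h y) x.
Proof.
  intros H Hx. apply (rc_comp n h Rinv x H).
  apply (continuity_pt_inv id); auto.
  apply (derivable_continuous_pt id (h x) (derivable_pt_id (h x))).
Qed.

Lemma rc_min n h1 h2 x : rc n h1 x -> rc n h2 x -> rc n (fun y => Rmin (h1 y) (h2 y)) x.
Proof.
  intros H1 H2 eps He.
  destruct (H1 eps He) as [d1 [Hd1 Y1]].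
  destruct (H2 eps He) as [d2 [Hd2 Y2]].
  exists (Rmin d1 d2); split; [apply Rmin_pos; auto|].
  intros y Sy Cy.
  assert (A1 := Y1 y Sy (fun i hi => Rlt_le_trans _ _ _ (Cy i hi) (Rmin_l _ _))).
  assert (A2 := Y2 y Sy (fun i hi => Rlt_le_trans _ _ _ (Cy i hi) (Rmin_r _ _))).
  apply Rabs_def2 in A1. apply Rabs_def2 in A2. apply Rabs_def1;
  unfold Rmin; destruct (Rle_dec (h1 y) (h2 y)); destruct (Rle_dec (h1 x) (h2 x)); lra.
Qed.

Fixpoint mn (k : nat) (x : nat -> R) : R :=
  match k with O => x O | S k' => Rmin (mn k' x) (x (S k')) end.

Definition gap (n j : nat) (x : nat -> R) : R := x j - mn n x.

Definition fac (n : nat) (L : list nat) (j : nat) (x : nat -> R) : R :=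
  if in_dec Nat.eq_dec j L then 1 else gap n j x.

Fixpoint Dp (n : nat) (L : list nat) (k : nat) (x : nat -> R) : R :=
  match k with O => fac n L O x | S k' => Dp n L k' x * fac n L (S k') x end.

Fixpoint subs (l : list nat) : list (list nat) :=
  match l with [] => [[]] | a :: l' => map (cons a) (subs l') ++ subs l' end.

Lemma mn_le k x j : (j <= k)%nat -> mn k x <= x j.
Proof.
  induction k; intro H; simpl.
  - replace j with O by lia. lra.
  - destruct (Nat.eq_dec j (S k)) as [->|Hn]; [apply Rmin_r|].
    eapply Rle_trans; [apply Rmin_l| apply IHk; lia].
Qed.

Lemma mn_attained k x : exists i, (i <= k)%nat /\ mn k x = x i.
Proof.
  induction k; simpl.
  - exists O; split; auto.
  - destruct IHk as [i [Hi E]]. unfold Rmin. destruct (Rle_dec (mn k x) (x (S k))).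
    + exists i; split; auto.
    + exists (S k); split; auto.
Qed.

Lemma gap_nonneg n j x : (j <= n)%nat -> 0 <= gap n j x.
Proof. intro H. unfold gap. pose proof (mn_le n x j H). lra. Qed.

Lemma fac_nonneg n L j x : (j <= n)%nat -> 0 <= fac n L j x.
Proof. intro H. unfold fac. destruct in_dec; [lra| now apply gap_nonneg]. Qed.

Lemma Dp_nonneg n L k x : (k <= n)%nat -> 0 <= Dp n L k x.
Proof.
  induction k; intro H; simpl.
  - apply fac_nonneg; lia.
  - apply Rmult_le_pos; [apply IHk; lia| apply fac_nonneg; lia].
Qed.

Lemma Dp_zero n L k x j : (j <= k)%nat -> ~ In j L -> gap n j x = 0 -> Dp n L k x = 0.
Proof.
  intros Hj HL Hg. induction k; simpl.
  - replace j with O in * by lia. unfold fac. destruct in_dec; tauto.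
  - destruct (Nat.eq_dec j (S k)) as [->|Hn].
    + unfold fac. destruct in_dec; [tauto|]. rewrite Hg. ring.
    + rewrite IHk; [ring|lia].
Qed.

Lemma Dp_pos n L k x : (forall j, (j <= k)%nat -> ~ In j L -> gap n j x > 0) -> Dp n L k x > 0.
Proof.
  intro H. induction k; simpl.
  - unfold fac. destruct in_dec; [lra| apply H; auto].
  - apply Rmult_lt_0_compat.
    + apply IHk. intros; apply H; auto.
    + unfold fac. destruct in_dec; [lra| apply H; auto].
Qed.

Lemma gap_zero_simplex_j n j x : (j <= n)%nat -> simplex_j n j x -> gap n j x = 0.
Proof.
  intros Hj [_ H]. unfold gap. destruct (mn_attained n x) as [i [Hi E]].
  pose proof (mn_le n x j Hj). pose proof (H i Hi). lra.
Qed.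

Lemma gap_zero_to_j n j x : simplex n x -> gap n j x = 0 -> simplex_j n j x.
Proof.
  intros S G. split; auto. intros i Hi. unfold gap in G. pose proof (mn_le n x i Hi). lra.
Qed.

Lemma rc_mn n k x : (k <= n)%nat -> rc n (mn k) x.
Proof.
  induction k; intro H; simpl.
  - apply rc_coord; lia.
  - apply rc_min; [apply IHk; lia| apply rc_coord; lia].
Qed.

Lemma rc_gap n j x : (j <= n)%nat -> rc n (gap n j) x.
Proof.
  intro H. unfold gap. apply (rc_ext n (fun y => y j + - mn n y)).
  { intro; ring. }
  apply rc_plus; [apply rc_coord; auto| apply rc_opp, rc_mn; auto].
Qed.

Lemma rc_Dp n L k x : (k <= n)%nat -> rc n (Dp n L k) x.
Proof.
  induction k; intro H; simpl.
  - unfold fac. destruct in_dec; [apply rc_const| apply rc_gap; lia].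
  - apply (rc_mult n (Dp n L k) (fac n L (S k))); [apply IHk; lia|].
    unfold fac. destruct in_dec; [apply rc_const| apply rc_gap; lia].
Qed.

Lemma subs_filter (P : nat -> bool) l : In (filter P l) (subs l).
Proof.
  induction l; simpl; auto. destruct (P a); apply in_or_app; [left; apply in_map| right]; auto.
Qed.

Lemma subs_sub L l : In L (subs l) -> incl L l /\ (NoDup l -> NoDup L).
Proof.
  revert L; induction l; simpl; intros L H.
  - destruct H as [<-|[]]. split; [intros ? []| constructor].
  - apply in_app_or in H. destruct H as [H|H].
    + apply in_map_iff in H. destruct H as [L' [<- H]]. destruct (IHl L' H) as [I1 I2].
      split.
      * intros z [<-|Hz]; [left; auto| right; auto].
      * intro ND. inversion ND; subst. constructor; auto.
    + destruct (IHl L H) as [I1 I2]. split.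
      * intros z Hz; right; auto.
      * intro ND. inversion ND; auto.
Qed.

Definition fsum (Ls : list (list nat)) (D : list nat -> R) : R :=
  fold_right (fun L acc => D L + acc) 0 Ls.

Lemma fsum_nonneg Ls D : (forall L, 0 <= D L) -> 0 <= fsum Ls D.
Proof. intro H. induction Ls; simpl; [lra|]. pose proof (H a). lra. Qed.

Lemma fsum_le Ls D L : (forall L, 0 <= D L) -> In L Ls -> D L <= fsum Ls D.
Proof.
  intros H. induction Ls; simpl; [tauto|]. intros [<-|Hi].
  - pose proof (fsum_nonneg Ls D H). lra.
  - pose proof (IHLs Hi). pose proof (H a). lra.
Qed.

Lemma fsum_div Ls D S0 : fsum Ls (fun L => D L / S0) = fsum Ls D / S0.
Proof. induction Ls; simpl; unfold fsum in *; simpl; [unfold Rdiv; ring|]. rewrite IHLs. unfold Rdiv; ring. Qed.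

Lemma fam_sum_map (A : CStarAlgebra) Ls (c : list nat -> (nat -> R) -> R) (v : (nat -> R) -> A) x :
  fam_sum A (map (fun L => (L, fun y => scal (rC (c L y)) (v y))) Ls) x =
  scal (rC (fsum Ls (fun L => c L x))) (v x).
Proof.
  induction Ls; simpl.
  - symmetry. apply scal0.
  - unfold fam_sum in *. simpl. rewrite IHLs. apply scal_add_r.
Qed.

Theorem lemma4p4p5 (A : CStarAlgebra) (n : nat) (I : nat -> A -> Prop)
  (hI : is_sum_of_ideals A I n)
  (J : list nat) (hJ : index_set n J) (p : nat)
  (f : (nat -> R) -> A) (hf : in_B_L A I n J f)
  (hzero : forall L : list nat, index_set n L -> length L = S p ->
             forall x, simplex_L n L x -> f x = zero) :
  exists F : list (list nat * ((nat -> R) -> A)),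
    (forall L g, In (L, g) F ->
        index_set n L /\ incl L J /\ (length L <= p)%nat /\ in_B_L A I n L g) /\
    (forall x, simplex n x -> f x = fam_sum A F x).
Proof.
  set (Ls := filter (fun L => Nat.leb (length L) p) (subs J)).
  set (SS := fun x => fsum Ls (fun L => Dp n L n x)).
  set (h := fun L x => Dp n L n x / SS x).
  assert (Dnn : forall L x, 0 <= Dp n L n x) by (intros; apply Dp_nonneg; lia).
  assert (Snn : forall x, 0 <= SS x) by (intros; apply fsum_nonneg; auto).
  destruct hf as [[fc [fb fi]] fv].
  assert (P3 : forall x, simplex n x -> SS x = 0 -> f x = zero).
  { intros x Sx HS.
    destruct (classic (exists j, (j <= n)%nat /\ ~ In j J /\ gap n j x = 0)) as [[j [Hj [HJ G]]]|NE].
    { apply (fv j x Hj HJ). now apply gap_zero_to_j. }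
    set (L0 := filter (fun j => if Req_dec_T (gap n j x) 0 then true else false) J).
    assert (HL0 : forall j, In j L0 -> In j J /\ gap n j x = 0).
    { intros j Hj. apply filter_In in Hj. destruct Hj as [H1 H2].
      destruct Req_dec_T; [auto| discriminate]. }
    destruct (le_lt_dec (length L0) p) as [Hle|Hlt].
    - exfalso.
      assert (In L0 Ls).
      { apply filter_In. split; [apply subs_filter| apply Nat.leb_le; auto]. }
      assert (Dp n L0 n x > 0).
      { apply Dp_pos. intros j Hj HnL.
        pose proof (gap_nonneg n j x Hj).
        destruct (Req_dec_T (gap n j x) 0) as [E|E]; [|lra].
        exfalso. destruct (classic (In j J)) as [HJ|HJ].
        - apply HnL. apply filter_In. split; auto. destruct Req_dec_T; tauto.
        - apply NE. exists j; auto. }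
      pose proof (fsum_le Ls (fun L => Dp n L n x) L0 (fun L => Dnn L x) H).
      unfold SS in HS. simpl in *. lra.
    - set (L1 := firstn (Datatypes.S p) L0).
      pose proof (firstn_skipn (Datatypes.S p) L0) as FS.
      assert (InL1 : forall j, In j L1 -> In j L0).
      { intros j Hj. rewrite <- FS. apply in_or_app; auto. }
      apply (hzero L1).
      + split.
        * apply (NoDup_app_remove_r _ (skipn (Datatypes.S p) L0)). unfold L1. rewrite FS.
          apply NoDup_filter. apply hJ.
        * intros j Hj. apply hJ. apply HL0. auto.
      + apply firstn_length_le. lia.
      + split; auto. intros j Hj. apply gap_zero_to_j; auto. apply HL0; auto. }
  exists (map (fun L => (L, fun y => scal (rC (h L y)) (f y))) Ls). split.
  - intros L g HLg. apply in_map_iff in HLg. destruct HLg as [L' [E HL']].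
    injection E as <- <-.
    apply filter_In in HL'. destruct HL' as [Hs Hl]. apply Nat.leb_le in Hl.
    destruct (subs_sub L' J Hs) as [Inc ND].
    assert (hle : forall y, 0 <= h L' y <= 1).
    { intro y. unfold h. destruct (Snn y) as [Hp|H0].
      - split. + unfold Rdiv; apply Rmult_le_pos; [auto| left; apply Rinv_0_lt_compat; auto].
        + apply (Rmult_le_reg_r (SS y)); auto. unfold Rdiv. rewrite Rmult_assoc, Rinv_l; [|lra].
          rewrite Rmult_1_r, Rmult_1_l. apply (fsum_le Ls (fun L => Dp n L n y)); auto.
          apply filter_In; split; auto. apply Nat.leb_le; auto.
      - rewrite <- H0. unfold Rdiv. rewrite Rinv_0, Rmult_0_r. lra. }
    split; [split; [apply ND, hJ| intros j Hj; apply hJ; auto]|].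
    split; [auto|]. split; [auto|].
    split; [split; [|split]|].
    +
      intros x Sx eps He.
      destruct (classic (f x = zero)) as [Z|NZ].
      * destruct (fc x Sx eps He) as [d [Hd Y]]. exists d; split; auto.
        intros y Sy Cy. rewrite Z, scal_zero, opp_zero, add_zero, norm_scalR.
        pose proof (Y y Sy Cy) as Y'. rewrite Z, opp_zero, add_zero in Y'.
        destruct (hle y). rewrite Rabs_right by lra.
        pose proof (norm_nonneg A (f y)). nra.
      * assert (Sp : SS x > 0).
        { destruct (Snn x); auto. exfalso. apply NZ. apply P3; auto. }
        assert (hc : rc n (h L') x).
        { unfold h. apply (rc_ext n (fun y => Dp n L' n y * / SS y)); [intro; reflexivity|].
          apply rc_mult; [apply rc_Dp; auto|]. apply rc_inv; [|lra].
          unfold SS. clear - Dnn. induction Ls; unfold fsum; simpl.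
          - apply rc_const.
          - apply rc_plus; [apply rc_Dp; auto| apply IHLs]. }
        set (N := norm (f x)). assert (HN : 0 <= N) by apply norm_nonneg.
        destruct (fc x Sx (eps / 2)) as [d1 [Hd1 Y1]]; [lra|].
        destruct (hc (eps / (2 * (N + 1)))) as [d2 [Hd2 Y2]].
        { apply Rdiv_lt_0_compat; lra. }
        exists (Rmin d1 d2); split; [apply Rmin_pos; auto|].
        intros y Sy Cy.
        assert (A1 := Y1 y Sy (fun i hi => Rlt_le_trans _ _ _ (Cy i hi) (Rmin_l _ _))).
        assert (A2 := Y2 y Sy (fun i hi => Rlt_le_trans _ _ _ (Cy i hi) (Rmin_r _ _))).
        rewrite key_id. eapply Rle_lt_trans; [apply norm_triangle|].
        rewrite !norm_scalR. fold N. destruct (hle y).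
        rewrite (Rabs_right (h L' y)) by lra.
        pose proof (norm_nonneg A (add (f y) (opp (f x)))).
        assert (E2 : Rabs (h L' y - h L' x) * N <= eps / (2 * (N + 1)) * N).
        { apply Rmult_le_compat_r; auto. lra. }
        assert (E3 : eps / (2 * (N + 1)) * N < eps / 2).
        { apply (Rmult_lt_reg_r (2 * (N + 1))); [lra|].
          replace (eps / (2 * (N + 1)) * N * (2 * (N + 1))) with (eps * N) by (field; lra).
          replace (eps / 2 * (2 * (N + 1))) with (eps * N + eps) by (field; lra). lra. }
        nra.
    + intros x Bx. rewrite (fb x Bx). apply scal_zero.
    + intros j x Hj Sj. apply (proj1 (proj2 (proj2 (proj1 hI j Hj)))). apply fi; auto.
    + intros j x Hj HnL Sj. unfold h.
      rewrite (Dp_zero n L' n x j Hj HnL (gap_zero_simplex_j n j x Hj Sj)).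
      unfold Rdiv. rewrite Rmult_0_l. apply scal0.
  - intros x Sx. rewrite fam_sum_map. unfold h. rewrite fsum_div. fold (SS x).
    destruct (Snn x) as [Hp|H0].
    + unfold Rdiv. rewrite Rinv_r by lra. symmetry. apply scal_one_r.
    + rewrite (P3 x Sx (eq_sym H0)). symmetry. apply scal_zero.
Qed.
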